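(* Let there be $k$ bidders and $n$ items, bidder $i$ having additive valuation with private values $v_{ij}\ge0$ drawn from publicly known independent distributions. Let $s^*=\mathbb{E}[\sum_j\max_i v_{ij}]$ and define the reserve-welfare mechanism: set the reserve welfare $\hat s=(1-\epsilon)s^*$; given bids $b_{ij}$, if $\sum_j\max_i b_{ij}<\hat s$ then no item is allocated and nobody pays; otherwise allocate the items according to an allocation $(S_1,\dots,S_k)$ (disjoint sets of items) maximizing $\sum_i\sum_{j\in S_i}b_{ij}$ and charge each bidder $i$ the price $p_i=\hat s-\sum_{\ell\ne i}\sum_{j\in S_\ell}b_{\ell j}$. If $\sum_j\max_i v_{ij}$ is $(\epsilon,\delta)$-concentrated for constants $\frac13>\epsilon>0$ and $1>\delta>0$, then the reserve-welfare mechanism is deterministically truthful, individually rational, and its expected revenue is at least $(1-k\epsilon-k\delta)\,s^*$.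
   Context: A random variable $X$ is $(\epsilon,\delta)$-concentrated if $X\in((1-\epsilon)\mathbb{E}[X],(1+\epsilon)\mathbb{E}[X])$ with probability at least $1-\delta$. Bidder $i$'s utility is $\sum_{j\in S_i}v_{ij}-p_i$ (zero if nothing is allocated and nothing paid). Deterministically truthful: for every $i$ and every bids of the others, reporting $v_i$ maximizes bidder $i$'s utility. Individually rational: truthful reporting always gives nonnegative utility. Expected revenue: $\mathbb{E}[\sum_i p_i]$ under truthful bidding. *)

(* Defs.v *)
From HB Require Import structures.
From mathcomp Require Import all_boot all_order all_algebra.
From mathcomp Require Import all_classical all_reals all_analysis.

Set Implicit Arguments.
Unset Strict Implicit.
Unset Printing Implicit Defensive.

Import Order.TTheory GRing.Theory Num.Theory.
Local Open Scope classical_set_scope.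
Local Open Scope ring_scope.

Section Auction.
Variables (R : realType) (k n : nat).

(* A bid (or valuation) profile: b i j = bid of bidder i for item j. *)
Definition profile := 'I_k -> 'I_n -> R.

Definition nonneg_profile (b : profile) := forall i j, 0 <= b i j.
Definition nonneg_row (vi : 'I_n -> R) := forall j, 0 <= vi j.

(* An allocation assigns each item to at most one bidder; S_i = [j | a j = Some i]. *)
Definition allocation := 'I_n -> option 'I_k.

Definition alloc_welfare (a : allocation) (b : profile) : R :=
  \sum_(i < k) \sum_(j < n | a j == Some i) b i j.

Definition is_max_alloc (a : allocation) (b : profile) :=
  forall a' : allocation, alloc_welfare a' b <= alloc_welfare a b.

(* sum_j max_i b_ij (bids are nonnegative, so 0 is a neutral default) *)
Definition opt_welfare (b : profile) : R :=
  \sum_(j < n) \big[Num.max/0]_(i < k) b i j.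

(* Reserve-welfare mechanism with reserve welfare shat and tie-breaking
   allocation rule A (A b is some welfare-maximizing allocation for b). *)
Definition allocated (shat : R) (b : profile) : bool := shat <= opt_welfare b.

Definition rw_price (shat : R) (A : profile -> allocation) (b : profile) (i : 'I_k) : R :=
  if allocated shat b then
    shat - \sum_(l < k | l != i) \sum_(j < n | A b j == Some l) b l j
  else 0.

Definition rw_value (shat : R) (A : profile -> allocation) (b : profile)
  (i : 'I_k) (vi : 'I_n -> R) : R :=
  if allocated shat b then \sum_(j < n | A b j == Some i) vi j else 0.

Definition rw_utility shat A (b : profile) i (vi : 'I_n -> R) : R :=
  rw_value shat A b i vi - rw_price shat A b i.

Definition rw_revenue shat A (b : profile) : R :=
  \sum_(i < k) rw_price shat A b i.

Definition upd (b : profile) (i : 'I_k) (bi : 'I_n -> R) : profile :=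
  fun l => if l == i then bi else b l.

Definition deterministically_truthful shat A :=
  forall (b : profile) (i : 'I_k) (vi bi : 'I_n -> R),
    nonneg_profile b -> nonneg_row vi -> nonneg_row bi ->
    rw_utility shat A (upd b i bi) i vi <= rw_utility shat A (upd b i vi) i vi.

Definition individually_rational shat A :=
  forall (b : profile) (i : 'I_k) (vi : 'I_n -> R),
    nonneg_profile b -> nonneg_row vi ->
    0 <= rw_utility shat A (upd b i vi) i vi.

End Auction.

Section Prob.
Context {d : measure_display} {T : measurableType d} {R : realType}.

Definition mutually_independent (I : finType) (P : probability T R)
  (X : I -> {RV P >-> R}) :=
  forall B : I -> set R, (forall i, measurable (B i)) ->
    P (\bigcap_(i in [set: I]) (X i @^-1` B i)) =
    (\prod_(i : I) P (X i @^-1` B i))%E.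


(* (eps,delta)-concentration; E[X] is required to be finite (a real number). *)
Definition concentrated (P : probability T R) (X : T -> R) (eps delta : R) :=
  exists m : R, ('E_P[X])%E = m%:E /\
    ((1 - delta)%:E <= P [set w | ((1 - eps) * m < X w < (1 + eps) * m)%R])%E.

End Prob.
Arguments mutually_independent {d T R I} P X.

(* Main.v *)
Require Import Defs.
From HB Require Import structures.
From mathcomp Require Import all_boot all_order all_algebra.
From mathcomp Require Import all_classical all_reals all_analysis.
From mathcomp Require Import lra.
Import Order.TTheory GRing.Theory Num.Theory.
Import measurable_realfun.
Local Open Scope classical_set_scope.
Local Open Scope ring_scope.

Section Comb.
Variables (R : realType) (k n : nat).
Implicit Types (b : profile R k n) (a : allocation k n).

Lemma alloc_welfareE a b : alloc_welfare a b =
  \sum_(j < n) (if a j is Some i then b i j else 0).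
Proof.
rewrite /alloc_welfare.
under eq_bigr do rewrite big_mkcond /=.
rewrite exchange_big /=; apply: eq_bigr => j _.
case: (a j) => [i0|]; last by rewrite big1.
rewrite (bigD1 i0) //= eqxx big1 ?addr0 // => i /negbTE Hi.
by case: eqP => // -[] Ei; rewrite Ei eqxx in Hi.
Qed.

Lemma alloc_le_opt a b : nonneg_profile b -> alloc_welfare a b <= opt_welfare b.
Proof.
move=> b0; rewrite alloc_welfareE /opt_welfare; apply: ler_sum => j _.
case: (a j) => [i|].
  exact: (le_bigmax (0:R) (fun i => b i j) i).
by apply/bigmax_geP; left.
Qed.

Lemma opt_le_alloc b : nonneg_profile b -> exists a, opt_welfare b <= alloc_welfare a b.
Proof.
move=> b0; case: (pickP (fun _ : 'I_k => true)) => [i0 _|none].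
  exists (fun j => Some [arg max_(i > i0) b i j]%O).
  rewrite alloc_welfareE /opt_welfare; apply: ler_sum => j _.
  case: (@arg_maxP _ _ _ i0 xpredT (fun i => b i j)) => // i _ Hi.
  by apply: bigmax_le => // l _; apply: Hi.
exists (fun _ => None); rewrite alloc_welfareE /opt_welfare.
apply: ler_sum => j _; rewrite big_pred0 //.
Qed.

Lemma max_alloc_opt a b : nonneg_profile b -> is_max_alloc a b ->
  alloc_welfare a b = opt_welfare b.
Proof.
move=> b0 am; apply/eqP; rewrite eq_le alloc_le_opt //.
by have [a' Ha'] := opt_le_alloc _ b0; apply: le_trans Ha' (am a').
Qed.
End Comb.

Section Mech.
Variables (R : realType) (k n : nat) (shat : R) (A : profile R k n -> allocation k n).
Hypothesis A_max : forall b, nonneg_profile b -> is_max_alloc (A b) b.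
Implicit Types (b : profile R k n).

Lemma utilE b i vi : rw_utility shat A b i vi =
  if allocated shat b then alloc_welfare (A b) (upd b i vi) - shat else 0.
Proof.
rewrite /rw_utility /rw_value /rw_price; case: ifP => _; last by rewrite subr0.
rewrite /alloc_welfare [in RHS](bigD1 i) //= /upd eqxx opprB addrA; congr (_ - _).
congr (_ + _); apply: eq_bigr => l /negbTE ->; by [].
Qed.

Lemma upd_upd b i x y : upd (upd b i x) i y = upd b i y.
Proof. rewrite /upd; apply: boolp.funext => l /=; by case: (l == i). Qed.

Lemma upd_nonneg b i vi : nonneg_profile b -> nonneg_row vi -> nonneg_profile (upd b i vi).
Proof. by move=> b0 v0 l j; rewrite /upd; case: ifP. Qed.

Lemma truthful : deterministically_truthful shat A.
Proof.
move=> b i vi bi b0 v0 bi0.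
rewrite !utilE !upd_upd.
set c := upd b i vi.
have c0 : nonneg_profile c by exact: upd_nonneg.
have Mc := @max_alloc_opt _ _ _ _ _ c0 (A_max _ c0).
have Hle : alloc_welfare (A (upd b i bi)) c <= opt_welfare c by exact: (@alloc_le_opt _ _ _ _ _ c0).
rewrite Mc /allocated; case: (leP shat (opt_welfare c)) => Hc.
  case: ifP => _; first by rewrite lerD2r.
  by rewrite subr_ge0.
case: ifP => _ //; rewrite subr_le0; apply: le_trans Hle _; exact: ltW.
Qed.

Lemma ir : individually_rational shat A.
Proof.
move=> b i vi b0 v0; rewrite utilE upd_upd.
have c0 := upd_nonneg b i vi b0 v0.
rewrite (@max_alloc_opt _ _ _ _ _ c0 (A_max _ c0)) /allocated.
by case: ifP => // H; rewrite subr_ge0.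
Qed.

Lemma revenueE b : nonneg_profile b -> rw_revenue shat A b =
  if allocated shat b then k%:R * shat - (k%:R - 1) * opt_welfare b else 0.
Proof.
move=> b0; rewrite /rw_revenue /rw_price; case: ifP => _; last by rewrite big1.
rewrite -(@max_alloc_opt _ _ _ _ _ b0 (A_max _ b0)) /alloc_welfare.
set X := fun l => \sum_(j < n | A b j == Some l) b l j.
rewrite sumrB sumr_const card_ord -[_ *+ _]mulr_natl.
have -> : \sum_(i < k) \sum_(l < k | l != i) X l = \sum_(i < k) (\sum_(l < k) X l - X i).
  by apply: eq_bigr => i _; rewrite [X in _ = X - _](bigD1 i) //= addrC addrK.
rewrite sumrB sumr_const card_ord -[(\sum_(l < k) X l) *+ k]GRing.mulr_natl mulrBl mul1r /X.
reflexivity.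
Qed.
End Mech.


Lemma rev_bound (d : measure_display) (T : measurableType d) (R : realType)
  (P : probability T R) (W rev : T -> R) (k : nat) (shat m eps delta : R) :
  measurable_fun setT W -> (forall w, 0 <= W w) -> ('E_P[W] = m%:E)%E ->
  shat = (1 - eps) * m -> 0 < eps -> eps < 1 -> 0 < delta -> delta < 1 ->
  ((1 - delta)%:E <= P [set w | ((1 - eps) * m < W w < (1 + eps) * m)%R])%E ->
  (0 < k)%N ->
  (forall w, rev w = if shat <= W w then k%:R * shat - (k%:R - 1) * W w else 0) ->
  (((1 - k%:R * eps - k%:R * delta) * m)%:E <= 'E_P[rev])%E.
Proof.
move=> mW W0 EW shatE e0 e1 d0 d1 Hc k0 revE.
rewrite unlock in EW *.
have m0 : 0 <= m.
  by rewrite -lee_fin -EW integral_ge0 // => w _; rewrite lee_fin.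
have k1 : 1 <= k%:R :> R by rewrite ler1n.
set c := k%:R * shat.
have c0 : 0 <= c by rewrite /c shatE mulr_ge0 ?mulr_ge0 // ?subr_ge0 ?ltW // (le_trans ler01 k1).
set S := [set w | shat <= W w].
have mS : measurable S.
  have := mW measurableT _ (measurable_itv `[shat, +oo[); rewrite setTI.
  congr measurable; apply/seteqP; split => w /=; rewrite /S /= in_itv /= andbT //.
have intW : P.-integrable setT (EFin \o W).
  apply/integrableP; split; first exact/measurable_EFinP.
  under eq_integral do rewrite /= ger0_norm //.
  by rewrite EW ltry.
have intS : P.-integrable setT (fun w => (c%:E * (\1_S w)%:E)%E).
  exact/integrableZl/integrable_indic.
have intkW : P.-integrable setT (fun w => ((k%:R - 1)%:E * (W w)%:E)%E).
  exact: integrableZl.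
have int_f : P.-integrable setT (fun w => (c * \1_S w - (k%:R - 1) * W w)%:E).
  apply: (eq_integrable measurableT _ _ _ (integrableB measurableT intS intkW)) => w _.
  by rewrite /= EFinB !EFinM.
have intB : P.-integrable setT (fun w => (c - (k%:R - 1) * W w)%:E).
  apply: (eq_integrable measurableT _ _ _ (integrableB measurableT (finite_measure_integrable_cst P c measurableT) intkW)) => w _.
  by rewrite /= EFinB !EFinM.
have int_g : P.-integrable setT (fun w => (rev w)%:E).
  apply: le_integrable _ _ intB => //.
    apply/measurable_EFinP.
    apply: (eq_measurable_fun (fun w => \1_S w * (c - (k%:R - 1) * W w))).
      move=> w _; rewrite revE /indic /S /=; case: ifP => H.
        by rewrite mem_set // mul1r.
      by rewrite memNset ?mul0r //= H.
    apply: measurable_funM; first exact: measurable_indic.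
    apply: measurable_funB; first exact: measurable_cst.
    exact: measurable_funM.
  move=> w _; rewrite revE; case: ifP => _ //.
  by rewrite abse0 abse_ge0.
have HS : ((1 - delta)%:E <= P S)%E.
  apply: (le_trans Hc); apply: le_measure; rewrite ?inE //.
    have := mW measurableT _ (measurable_itv `](1 - eps) * m, (1 + eps) * m[); rewrite setTI.
    congr measurable; apply/seteqP; split => w /=; rewrite in_itv //.
  by move=> w /= /andP[/ltW + _]; rewrite /S /= shatE.
have Hfg : (\int[P]_w (c * \1_S w - (k%:R - 1) * W w)%:E <= \int[P]_w (rev w)%:E)%E.
  apply: le_integral => // w _; rewrite revE lee_fin /indic /S /=; case: ifP => H.
    by rewrite mem_set // mulr1.
  rewrite memNset ?mulr0 ?sub0r ?oppr_le0 //= ?H //.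
  by rewrite mulr_ge0 // subr_ge0.
apply: le_trans Hfg.
under eq_integral do rewrite EFinB !EFinM.
rewrite integralB_EFin //= ?integralZl //.
rewrite (eq_integral (fun x => c%:E * (\1_S x)%:E)%E); last by move=> x _; rewrite EFinM.
rewrite [X in (_ - X)%E](eq_integral (fun x => (k%:R - 1)%:E * (W x)%:E)%E); last by move=> x _; rewrite EFinM.
rewrite integralZl //; last exact: integrable_indic.
rewrite integral_indic // setIT integralZl // EW.
apply: (@le_trans _ _ ((c * (1 - delta))%:E - ((k%:R - 1) * m)%:E)%E).
  rewrite -EFinB lee_fin /c shatE.
  have : 0 <= k%:R * eps * delta * m by rewrite !mulr_ge0 // ltW.
  set K := k%:R. nra.
apply: leeB; last by rewrite EFinM.
by rewrite EFinM; apply: lee_wpmul2l => //; rewrite lee_fin.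
Qed.

Lemma meas_bigmax (d : measure_display) (T : measurableType d) (R : realType)
  (I : Type) (s : seq I) (F : I -> T -> R) :
  (forall i, measurable_fun setT (F i)) ->
  measurable_fun setT (fun w => \big[Num.max/0]_(i <- s) F i w).
Proof.
move=> HF; elim: s => [|i s IH].
  under eq_fun do rewrite big_nil. exact: measurable_cst.
under eq_fun do rewrite big_cons.
exact: (measurable_maxr (HF i) IH).
Qed.

Theorem theorem7 (d : measure_display) (T : measurableType d) (R : realType)
  (P : probability T R) (k n : nat)
  (v : 'I_k -> 'I_n -> {RV P >-> R})
  (v_ge0 : forall i j w, 0 <= v i j w)
  (v_indep : mutually_independent P (fun ij : 'I_k * 'I_n => v ij.1 ij.2))
  (eps delta : R) (eps_gt0 : 0 < eps) (eps_lt : eps < 1 / 3)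
  (delta_gt0 : 0 < delta) (delta_lt1 : delta < 1)
  (A : profile R k n -> allocation k n)
  (A_max : forall b, nonneg_profile b -> is_max_alloc (A b) b) :
  let V : T -> profile R k n := fun w i j => v i j w in
  let W : T -> R := fun w => opt_welfare (V w) in
  let sstar : R := fine ('E_P[W])%E in
  let shat : R := (1 - eps) * sstar in
  concentrated P W eps delta ->
  [/\ deterministically_truthful shat A,
      individually_rational shat A &
      (((1 - k%:R * eps - k%:R * delta) * sstar)%:E
        <= 'E_P[fun w => rw_revenue shat A (V w)])%E ].
Proof.
move=> V W sstar shat [m [Em Hc]].
have sE : sstar = m by rewrite /sstar Em.
have V0 : forall w, nonneg_profile (V w) by move=> w i j; exact: v_ge0.
split; first exact: truthful.
  exact: ir.
have e1 : eps < 1 by apply: (lt_trans eps_lt); rewrite ltr_pdivrMr // mul1r ltr1n.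
have [k0|kpos] := posnP k.
  have rev0 : (fun w => rw_revenue shat A (V w)) = cst 0.
    apply/boolp.funext => w; apply: big1 => i _.
    by case: i => i ilt; exfalso; move: ilt; rewrite k0.
  have W0 : W = cst 0.
    apply/boolp.funext => w; rewrite /W /opt_welfare /=.
    apply: big1 => j _; apply/eqP; rewrite eq_le; apply/andP; split.
      apply: bigmax_le => // i _.
      by case: i => i ilt; exfalso; move: ilt; rewrite k0.
    by apply/bigmax_geP; left.
  rewrite rev0 expectation_cst k0 !mul0r !subr0 mul1r sE.
  by move: Em; rewrite W0 expectation_cst => -[->].
rewrite sE.
apply: (@rev_bound _ _ _ P W _ k shat m eps delta _ _ Em _ eps_gt0 e1 delta_gt0 delta_lt1 Hc kpos).
- apply: measurable_sum => j; apply: meas_bigmax => i.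
  exact: measurable_funPT.
- move=> w; apply: sumr_ge0 => j _; apply/bigmax_geP; left; exact: lexx.
- by rewrite /shat sE.
- move=> w; rewrite revenueE //.
Qed.
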